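(* Let $d\ge 2$, let $\mathbf f_t(z)=\frac{z^d+t}{z}\in\overline{\mathbb Q}(t)(z)$, and let $\mathbf c=\mathbf A/\mathbf B\in\overline{\mathbb Q}(t)$ with $\mathbf A,\mathbf B\in\overline{\mathbb Q}[t]$ coprime. If $\mathbf c(0)=0$, then $$\widehat h_{\mathbf f}(\mathbf c)=\frac{\deg(\mathbf f_t(\mathbf c(t)))}{d}=\frac{\deg(\mathbf f_t^2(\mathbf c(t)))}{d^2}.$$
   Context: For a rational function $g\in\overline{\mathbb Q}(t)$, $\deg(g)$ is the maximum of the degrees of numerator and denominator in lowest terms. $\widehat h_{\mathbf f}(\mathbf c)=\lim_{n\to\infty}\deg(\mathbf f_t^n(\mathbf c(t)))/d^n$, where $\mathbf f_t^n$ denotes the $n$-th iterate of $z\mapsto\mathbf f_t(z)$. The condition $\mathbf c(0)=0$ means $\mathbf A(0)=0$. *)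

(* Defs.v *)
From HB Require Import structures.
From mathcomp Require Import all_boot all_order all_algebra all_field.
From mathcomp Require Import fraction.
From mathcomp Require Import all_classical all_reals all_analysis.
Set Implicit Arguments. Unset Strict Implicit. Unset Printing Implicit Defensive.
Import Order.TTheory GRing.Theory Num.Theory.
Local Open Scope ring_scope.

(* Qbar = algC (algebraic numbers); Qbar(t) = {fraction {poly algC}}, t = 'X. *)
Notation Kt := {fraction {poly algC}}.

Definition polyF (p : {poly algC}) : Kt := tofrac p.

Definition tvar : Kt := polyF 'X.

(* degree of a rational function: max of the degrees of numerator and
   denominator in lowest terms (reduce a representative by its gcd). *)
Definition rdeg (g : Kt) : nat :=
  let n := (frac (repr g)).1 in
  let m := (frac (repr g)).2 in
  let g0 := gcdp n m in
  (maxn (size (n %/ g0)) (size (m %/ g0))).-1.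

(* points of P^1 over Qbar(t): None is the point at infinity *)
Definition P1 := option Kt.

Definition fT (d : nat) (z : P1) : P1 :=
  match z with
  | None => None
  | Some w => if w == 0 then None else Some ((w ^+ d + tvar) / w)
  end.

(* degree of a point of P^1(Qbar(t)); oo is a constant point (degree 0) *)
Definition pdeg (z : P1) : nat :=
  match z with None => 0%N | Some w => rdeg w end.

(* Main.v *)
Require Import Defs.
From HB Require Import structures.
From mathcomp Require Import all_boot all_order all_algebra all_field.
From mathcomp Require Import fraction generic_quotient.
From mathcomp Require Import all_classical all_reals all_analysis.
From mathcomp Require Import ring lra zify.
Import Order.TTheory GRing.Theory Num.Theory numFieldNormedType.Exports.
Local Open Scope ring_scope.

Lemma piM (r : {ratio {poly algC}}) :
  (\pi_(Kt) r)%qT * polyF r.2 = polyF r.1.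
Proof.
rewrite /polyF.
have E x : tofrac x = (\pi_(Kt) (Ratio x 1))%qT by rewrite !piE.
rewrite !E.
rewrite -[_ * _]/(FracField.mul _ _) !piE.
apply/eqmodP; rewrite /= FracField.equivfE /=.
rewrite /FracField.mulf !numden_Ratio ?oner_eq0 ?mulf_neq0 ?denom_ratioP ?oner_eq0 //.
by rewrite !mulr1 mulrC.
Qed.

Lemma cop_eq {a b c e : {poly algC}} : coprimep a b -> coprimep c e ->
  a * e = b * c -> size a = size c /\ size b = size e.
Proof.
move=> cab cce E.
have h1 : a %= c.
  rewrite /eqp; apply/andP; split.
    by rewrite -(Gauss_dvdpr _ cab) -E dvdp_mulr.
  by rewrite -(Gauss_dvdpl _ cce) E dvdp_mull.
have h2 : b %= e.
  rewrite /eqp; apply/andP; split.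
    rewrite coprimep_sym in cab.
    by rewrite -(Gauss_dvdpr _ cab) E dvdp_mulr.
  rewrite coprimep_sym in cce.
  by rewrite -(Gauss_dvdpl _ cce) -E dvdp_mull.
by rewrite (eqp_size h1) (eqp_size h2).
Qed.

Lemma rdeg_frac (P Q : {poly algC}) : Q != 0 -> coprimep P Q ->
  rdeg (polyF P / polyF Q) = (maxn (size P) (size Q)).-1.
Proof.
move=> Q0 cPQ; rewrite /rdeg.
set g := _ / _.
set r := repr g.
have h1 : polyF r.1 = g * polyF r.2 by rewrite -piM reprK.
have QF : polyF Q != 0 by rewrite /polyF tofrac_eq0.
have h2 : r.1 * Q = r.2 * P.
  apply/eqP; rewrite -(tofrac_eq (r.1 * Q)) !tofracM.
  move: h1; rewrite /polyF => ->; rewrite /g /polyF.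
  by rewrite mulrAC mulfVK // mulrC.
have m0 : r.2 != 0 by exact: denom_ratioP.
set n := r.1 in h2 *; set m := r.2 in h2 m0 *.
set g0 := gcdp n m.
have g00 : g0 != 0 by rewrite gcdp_eq0 negb_and m0 orbT.
have En : n %/ g0 * g0 = n by rewrite divpK // dvdp_gcdl.
have Em : m %/ g0 * g0 = m by rewrite divpK // dvdp_gcdr.
have cop : coprimep (n %/ g0) (m %/ g0) by apply: coprimep_div_gcd; rewrite m0 orbT.
have E : (n %/ g0) * Q = (m %/ g0) * P.
  apply: (mulIf g00); rewrite mulrAC En mulrAC Em h2 //.
have [-> ->] := cop_eq cop cPQ E.
by [].
Qed.

Definition GoodPQ (P Q : {poly algC}) :=
  [/\ P.[0] != 0, Q != 0, coprimep P Q & (size Q < size P)%N].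

Lemma sizeX (p : {poly algC}) n : p != 0 -> size (p ^+ n) = ((size p).-1 * n).+1.
Proof.
move=> p0; rewrite -size_exp prednK // size_poly_gt0 expf_neq0 //.
Qed.

Lemma copX (P : {poly algC}) : P.[0] != 0 -> coprimep P 'X.
Proof. by move=> h; have := coprimep_XsubC P 0; rewrite subr0 => ->. Qed.

Lemma polyFD x y : polyF (x + y) = polyF x + polyF y. Proof. exact: tofracD. Qed.
Lemma polyFM x y : polyF (x * y) = polyF x * polyF y. Proof. exact: tofracM. Qed.
Lemma polyFX x n : polyF (x ^+ n) = polyF x ^+ n. Proof. exact: tofracXn. Qed.

Lemma fid1 (F:fieldType) (A p q x B : F) : p != 0 -> q != 0 -> B != 0 ->
  (A / (q * B) + x) / (p / q) = (A + x * (q * B)) / (p * B).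
Proof. move=> p0 q0 B0. field. by rewrite p0 q0 B0. Qed.

Lemma step e (P Q : {poly algC}) : GoodPQ P Q ->
  [/\ fT e.+2 (Some (polyF P / polyF Q)) =
        Some (polyF (P ^+ e.+2 + 'X * Q ^+ e.+2) / polyF (P * Q ^+ e.+1)),
      GoodPQ (P ^+ e.+2 + 'X * Q ^+ e.+2) (P * Q ^+ e.+1) &
      (size (P ^+ e.+2 + 'X * Q ^+ e.+2)).-1 = (e.+2 * (size P).-1)%N].
Proof.
case=> P00 Q0 cPQ sQP.
have P0 : P != 0 by rewrite -size_poly_gt0 (leq_ltn_trans _ sQP).
have Qs : (0 < size Q)%N by rewrite size_poly_gt0.
have PF : polyF P != 0 by rewrite /polyF tofrac_eq0.
have QF : polyF Q != 0 by rewrite /polyF tofrac_eq0.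
have sA : size (P ^+ e.+2) = ((size P).-1 * e.+2).+1 by rewrite sizeX.
have sB : size ('X * Q ^+ e.+2) = ((size Q).-1 * e.+2).+2.
  by rewrite mulrC size_mulX ?expf_neq0 // sizeX.
have sP' : size (P ^+ e.+2 + 'X * Q ^+ e.+2) = ((size P).-1 * e.+2).+1.
  rewrite size_polyDl sA // sB.
  nia.
split.
- have w0 : polyF P / polyF Q != 0 := mulf_neq0 PF (invr_neq0 QF).
  rewrite /fT (negbTE w0).
  congr Some.
  rewrite /tvar polyFD (polyFM 'X) (polyFM P) !polyFX.
  rewrite expr_div_n [polyF Q ^+ e.+2]exprS.
  set A := polyF P ^+ e.+2; set B := polyF Q ^+ e.+1.
  have B0 : B != 0 := expf_neq0 _ QF.


  exact: fid1 PF QF B0.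
- split.
  + rewrite hornerD horner_exp (hornerM 'X) hornerX mul0r addr0; exact: expf_neq0 _ P00.
  + by rewrite mulf_neq0 ?expf_neq0.
  + rewrite coprimepMr; apply/andP; split.
      rewrite coprimep_sym exprSr coprimep_addl_mul coprimepMr copX //=.
      exact: coprimep_expr.
    rewrite coprimep_pexpr // coprimep_sym addrC exprSr mulrA coprimep_addl_mul.
    by apply: coprimep_expr; rewrite coprimep_sym.
  + rewrite sP' size_mul ?expf_neq0 // sizeX //.
    move: sQP Qs; case: (size P) => [|x] //; case: (size Q) => [|y] // /= h _.
    have h2 : (y * e.+1 < x * e.+1)%N by rewrite ltn_mul2r.
    lia.
- rewrite sP' /=.
  nia.
Qed.

Local Open Scope classical_set_scope.
Local Open Scope ring_scope.

Lemma cvg_ev (R : realType) (u : nat -> R) K : (forall n, u n.+1 = K) ->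
  (u @ \oo --> u 1%N) /\ u 1%N = u 2%N.
Proof.
move=> h; split; last by rewrite !h.
apply: cvg_near_cst; exists 1%N => // n /= hn.
by case: n hn => // n _; rewrite !h.
Qed.

Lemma fid2 (F:fieldType) (a x b Ae Xe Be : F) : a != 0 -> x != 0 -> b != 0 -> Be != 0 ->
 ((Ae * (x * Xe)) / (b * Be) + x) / (a * x / b) = (Xe * Ae + b * Be) / (a * Be).
Proof. move=> a0 x0 b0 B0. field. by rewrite a0 x0 b0 B0. Qed.

Lemma step0 e (A B : {poly algC}) : B != 0 -> coprimep A B -> A.[0] = 0 -> A != 0 ->
  exists P Q, fT e.+2 (Some (polyF A / polyF B)) = Some (polyF P / polyF Q) /\ GoodPQ P Q.
Proof.
move=> B0 cAB A00 A0.
have /factor_theorem [A1 EA] : root A 0 by rewrite /root A00.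
rewrite subr0 in EA.
have A10 : A1 != 0 by apply: contraNneq A0; rewrite EA => ->; rewrite mul0r.
have cXB : coprimep 'X B by apply: (coprimep_dvdr _ cAB); rewrite EA dvdp_mull.
have B00 : B.[0] != 0.
  by have := coprimep_XsubC B 0; rewrite subr0 coprimep_sym cXB.
have cA1B : coprimep A1 B by apply: (coprimep_dvdr _ cAB); rewrite EA dvdp_mulr.
exists ('X ^+ e.+1 * A1 ^+ e.+2 + B ^+ e.+2), (A1 * B ^+ e.+1); split.
- have aF : polyF A1 != 0 by rewrite /polyF tofrac_eq0.
  have xF : polyF 'X != 0 by rewrite /polyF tofrac_eq0 polyX_eq0.
  have bF : polyF B != 0 by rewrite /polyF tofrac_eq0.
  have AF : polyF A = polyF A1 * polyF 'X by rewrite EA polyFM.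
  have AF0 : polyF A != 0.
    rewrite AF; exact: mulf_neq0 aF xF.
  have w0 : polyF A / polyF B != 0 := mulf_neq0 AF0 (invr_neq0 bF).
  rewrite /fT (negbTE w0); congr Some.
  rewrite /tvar polyFD (polyFM ('X ^+ e.+1) (A1 ^+ e.+2)) (polyFM A1 (B ^+ e.+1)) !polyFX AF.
  rewrite expr_div_n exprMn [polyF 'X ^+ e.+2]exprS [polyF B ^+ e.+2]exprS.
  have Be0 : polyF B ^+ e.+1 != 0 := expf_neq0 _ bF.

  exact: fid2 aF xF bF Be0.
- split.
  + rewrite hornerD (hornerM ('X ^+ e.+1)) hornerXn expr0n /= mul0r add0r horner_exp.
    exact: expf_neq0 _ B00.
  + exact: mulf_neq0 A10 (expf_neq0 _ B0).
  + rewrite coprimepMr; apply/andP; split.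
      rewrite coprimep_sym (exprSr A1) mulrA coprimep_addl_mul.
      exact: coprimep_expr _ cA1B.
    rewrite coprimep_pexpr // coprimep_sym addrC (exprSr B) coprimep_addl_mul coprimepMr.
    apply/andP; split; apply: coprimep_expr; rewrite coprimep_sym //.
  + have s1 : size ('X ^+ e.+1 * A1 ^+ e.+2) = (e.+1 + ((size A1).-1 * e.+2).+1)%N.
      by rewrite mulrC size_mulXn ?expf_neq0 // sizeX.
    have s2 : size (B ^+ e.+2) = ((size B).-1 * e.+2).+1 by rewrite sizeX.
    have s3 : size (A1 * B ^+ e.+1) = (size A1 + ((size B).-1 * e.+1).+1).-1.
      by rewrite size_mul ?expf_neq0 // sizeX.
    have sA1 : (0 < size A1)%N by rewrite size_poly_gt0.
    have sB1 : (0 < size B)%N by rewrite size_poly_gt0.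
    move: s1 s2 s3 sA1 sB1.
    case: (size A1) => [|x] //; case: (size B) => [|y] // /= s1 s2 s3 _ _.
    case: (leqP y x) => hxy.
    * have h1 : (y * e.+2 <= x * e.+2)%N by rewrite leq_mul2r hxy orbT.
      have h2 : (y * e.+1 <= x * e.+1)%N by rewrite leq_mul2r hxy orbT.
      rewrite size_polyDl; [rewrite s3 s1; lia | rewrite s1 s2; lia].
    * have h1 : (x.+1 * e.+2 <= y * e.+2)%N by rewrite leq_mul2r hxy orbT.
      rewrite addrC size_polyDl; [rewrite s3 s2; lia | rewrite s1 s2; lia].
Qed.

Theorem proposition3p3 (R : realType) (d : nat) (A B : {poly algC}) :
  (2 <= d)%N -> B != 0 -> coprimep A B -> A.[0] = 0 ->
  let c : P1 := Some (polyF A / polyF B) in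
  let u : nat -> R := fun n => (pdeg (iter n (fT d) c))%:R / (expn d n)%:R in
  (u @ \oo --> u 1%N) /\ u 1%N = u 2%N.
Proof.
case: d => [|[|e]] // _ B0 cAB A00 c u.
case: (eqVneq A 0) => [EA|A0].
  apply: (@cvg_ev R u 0) => n.
  rewrite /u; suff -> : iter n.+1 (fT e.+2) c = None by rewrite /= mul0r.
  elim: n => [|n IH].
    rewrite /c /= EA /polyF tofrac0 mul0r eqxx //.
  by rewrite iterS IH.
have [Pa [Qa [E1 G1]]] := step0 e A B B0 cAB A00 A0.
set D := (size Pa).-1.
have H n : exists P Q, [/\ iter n.+1 (fT e.+2) c = Some (polyF P / polyF Q),
    GoodPQ P Q & (size P).-1 = (e.+2 ^ n * D)%N].
  elim: n => [|n [P [Q [EP GP SP]]]].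
    by exists Pa, Qa; split => //; rewrite expn0 mul1n.
  have [E' G' S'] := step e P Q GP.
  exists (P ^+ e.+2 + 'X * Q ^+ e.+2), (P * Q ^+ e.+1); split => //.
    by rewrite iterS EP E'.
  by rewrite S' SP expnS mulnA.
apply: (@cvg_ev R u (D%:R / (e.+2)%:R)) => n.
have [P [Q [EP [_ Q0 cPQ sQP] SP]]] := H n.
rewrite /u EP /= rdeg_frac // (maxn_idPl (ltnW sQP)) SP.
have dn : (e.+2 ^ n)%:R != 0 :> R by rewrite pnatr_eq0 expn_eq0.
rewrite expnS mulnC !natrM -mulf_div.
by rewrite (divff dn) mulr1.
Qed.
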